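(* Let $q\equiv 3\pmod 4$ be a prime power with $q\geq 7$, let $n\geq 3$ be an integer and let $q'$ be a prime power. The parameter triples $$\Big(q,\tfrac{q-1}{2},\tfrac{q-3}{4}\Big)\quad\text{and}\quad\Big(\tfrac{q'^n-1}{q'-1},\tfrac{q'^{n-1}-1}{q'-1},\tfrac{q'^{n-2}-1}{q'-1}\Big)$$ (of the bi-Paley graph $BP(q)$ and of the incidence graph $I_n(q')$, respectively) coincide only when $q'=2$ and $q=2^n-1$ is a prime.
   Context: These triples are the design parameters (half-size, degree, number of common neighbours of two distinct same-colour vertices) of the bi-Paley graph $BP(q)$ and of the incidence graph $I_n(q')$ of $1$-dimensional versus $(n-1)$-dimensional subspaces of an $n$-dimensional vector space over the field with $q'$ elements. *)

(* Defs.v *)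
From mathcomp Require Import all_boot.
Set Implicit Arguments. Unset Strict Implicit. Unset Printing Implicit Defensive.

Definition prime_power (q : nat) : Prop :=
  exists p k : nat, prime p /\ 0 < k /\ q = p ^ k.

(* Parameters (half-size, degree, common neighbours) of the bi-Paley graph BP(q). *)
Definition bp_params (q : nat) : nat * nat * nat :=
  (q, (q - 1) %/ 2, (q - 3) %/ 4).

(* Parameters of the incidence graph I_n(q') of points vs hyperplanes of F_q'^n. *)
Definition inc_params (n q' : nat) : nat * nat * nat :=
  ((q' ^ n - 1) %/ (q' - 1), (q' ^ n.-1 - 1) %/ (q' - 1),
   (q' ^ (n - 2) - 1) %/ (q' - 1)).

(* Main.v *)
Require Import Defs.
From mathcomp Require Import all_boot.
From mathcomp Require Import zify.

Fixpoint gs (Q m : nat) : nat := if m is m'.+1 then 1 + Q * gs Q m' else 0.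

Lemma geom Q0 m : Q0 * gs Q0.+1 m + 1 = Q0.+1 ^ m.
Proof.
elim: m => [|m IH] /=; first by rewrite muln0 expn0.
rewrite expnS -IH. nia.
Qed.

Lemma geom_div Q0 m : 0 < Q0 -> (Q0.+1 ^ m - 1) %/ (Q0.+1 - 1) = gs Q0.+1 m.
Proof.
move=> hQ; rewrite -(geom Q0 m) addnK subn1 /=. exact: mulKn.
Qed.

Lemma odd_fact x j : odd x -> exists u, x ^ (2 * j + 1) + 1 = (x + 1) * u /\ odd u.
Proof.
move=> ox; elim: j => [|j [u [Eu ou]]].
  by exists 1; rewrite muln0 add0n expn1 muln1.
have u1 : 0 < u by case: (posnP u) ou => [->|].
have x1 : 0 < x by case: (posnP x) ox => [->|].
have le : x <= x * x * u by nia.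
exists (x * x * u + 1 - x); split.
  have -> : 2 * j.+1 + 1 = (2 * j + 1).+2 by lia.
  rewrite !expnS mulnA. move: Eu; set y := x ^ (2 * j + 1) => Eu. nia.
rewrite addnC -addnBA // oddD oddB // !oddM ox ou /=. done.
Qed.

Lemma pp_eq p k n : prime p -> p ^ k %% 4 = 3 -> p ^ k + 1 = 2 ^ n -> k = 1.
Proof.
move=> pp h4 h2.
have op : odd p.
  have : odd (p ^ k) by rewrite (divn_eq (p ^ k) 4) h4 oddD oddM andbF.
  by rewrite oddX => /orP [/eqP k0|//]; move: h4; rewrite k0 expn0 modn_small.
have [j [kE|kE]] : exists j, k = 2 * j \/ k = 2 * j + 1.
  have := odd_double_half k; move: (k./2) => h.
  by case: (odd k) => /= E; exists h; [right|left]; rewrite -E -mul2n; lia.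
- exfalso; move: h4; rewrite kE mulnC expnM.
  have : odd (p ^ j) by rewrite oddX op orbT.
  move: (p ^ j) => y oy.
  rewrite -(odd_double_half y) oy -mul2n.
  move: (y./2) => a.
  have -> : (1 + 2 * a) ^ 2 = 1 + 4 * (a * a + a).
    rewrite expnS expn1. nia.
  by rewrite addnC [4 * _]mulnC modnMDl.
- have [u [Eu ou]] := odd_fact p j op.
  rewrite -kE h2 in Eu.
  have : u %| 2 ^ n by rewrite Eu dvdn_mull.
  case/(dvdn_pfactor _ _ (isT : prime 2))=> [m _ um].
  have m0 : m = 0.
    by case: m um => // m um; move: ou; rewrite um oddX.
  rewrite um m0 expn0 muln1 in Eu.
  have : p ^ k = p ^ 1 by rewrite expn1; lia.
  by move/eqP; rewrite eqn_exp2l ?prime_gt1 // => /eqP.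
Qed.

Theorem mainTheorem9 (q n q' : nat) :
  prime_power q -> q %% 4 = 3 -> 7 <= q -> 3 <= n -> prime_power q' ->
  bp_params q = inc_params n q' ->
  q' = 2 /\ q = 2 ^ n - 1 /\ prime q.
Proof.
move=> [p [k [pp [k0 qE]]]] h4 h7 hn [r [l [pr [l0 qE']]]].
have Q2 : 2 <= q'.
  rewrite qE'; apply: leq_trans (prime_gt1 pr) _.
  by rewrite -{1}(expn1 r) leq_pexp2l // prime_gt0.
case: q' Q2 qE' => // Q0 Q2 qE'.
have Q0p : 0 < Q0 by [].
case: n hn => // m hn.
rewrite /bp_params /inc_params => -[E1 E2 _].
move: E1 E2; rewrite !geom_div // => E1 E2.
have sm1 : 0 < gs Q0.+1 m by case: (m) hn => [|m0] //= _; rewrite add1n.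
have hq : q - 1 = 2 * ((q - 1) %/ 2) by lia.
rewrite E2 E1 /= addKn in hq.
have Q2' : Q0.+1 = 2.
  by apply/eqP; rewrite -(eqn_pmul2r sm1) hq.
have qn : q = 2 ^ m.+1 - 1.
  by rewrite -Q2' -(geom Q0 m.+1) E1 addnK; move: Q2'; case=> ->; rewrite mul1n.
split=> //; split=> //.
have := @pp_eq p k m.+1 pp.
rewrite -qE => /(_ h4) H.
have k1 : k = 1.
  apply: H; rewrite qn subnK //; exact: expn_gt0.
by rewrite qE k1 expn1.
Qed.
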